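(* For every integer $k\geq 0$ and $n=3^{k}\cdot 7$, there exists a regular $n$-tournament that is not $(n-1)$-spectrally monomorphic.
   Context: An $n$-tournament is a digraph on $n$ vertices in which every pair of distinct vertices is joined by exactly one arc. Its adjacency matrix $A=(a_{ij})$ (w.r.t. an ordering $v_1,\dots,v_n$) has $a_{ij}=1$ if $v_i$ dominates $v_j$ and $0$ otherwise. A tournament is regular if all its vertices have the same out-degree (necessarily $(n-1)/2$). A tournament is $k$-spectrally monomorphic if all the $k\times k$ principal submatrices of its adjacency matrix have the same characteristic polynomial $\det(zI-M)$. *)

(* Defs.v *)
From mathcomp Require Import all_boot all_order all_algebra.
Set Implicit Arguments. Unset Strict Implicit. Unset Printing Implicit Defensive.
Import GRing.Theory.
Local Open Scope ring_scope.

(* An n-tournament on vertex set 'I_n, given by its domination relation: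
   dom i j means v_i dominates v_j. *)

Definition tournament (n : nat) (dom : rel 'I_n) : Prop :=
  (forall i : 'I_n, dom i i = false) /\
  (forall i j : 'I_n, i != j -> dom i j (+) dom j i).

Definition adj (n : nat) (dom : rel 'I_n) : 'M[int]_n :=
  \matrix_(i, j) (dom i j)%:R.

Definition outdeg (n : nat) (dom : rel 'I_n) (i : 'I_n) : nat :=
  #|[set j | dom i j]|.

Definition regular_tournament (n : nat) (dom : rel 'I_n) : Prop :=
  tournament dom /\ (forall i j : 'I_n, outdeg dom i = outdeg dom j).

(* Principal submatrix of A on the index set S (rows/columns kept in the
   increasing order of S). *)
Definition principal_submx (R : Type) (n : nat) (A : 'M[R]_n)
  (S : {set 'I_n}) : 'M[R]_#|S| :=
  \matrix_(i, j) A (enum_val i) (enum_val j).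

Definition spectrally_monomorphic (k n : nat) (dom : rel 'I_n) : Prop :=
  forall S T : {set 'I_n}, #|S| = k -> #|T| = k ->
    char_poly (principal_submx (adj dom) S) =
    char_poly (principal_submx (adj dom) T).

(* Main.v *)
Require Import Defs.
From mathcomp Require Import all_boot all_order all_algebra.
From mathcomp Require Import fingroup perm mxtens zify.
Set Implicit Arguments. Unset Strict Implicit. Unset Printing Implicit Defensive.
Import GRing.Theory.

Lemma count_int (a b h : nat) :
  \sum_(0 <= j < h) ((a <= j) && (j < b) : nat) = minn b h - minn a h.
Proof.
elim: h => [|h IH]; first by rewrite big_geq.
rewrite big_nat_recr //= IH.
case: (leqP a h) => Hah /=; case: (ltnP h b) => Hhb /=; lia.
Qed.

Lemma count_lt (b h : nat) :
  \sum_(0 <= j < h) (j < b : nat) = minn b h.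
Proof. by have := count_int 0 b h; rewrite min0n subn0. Qed.

Definition circn (d i j : nat) : bool := ((i < j) && (j <= i + d)) || (j + d < i).

Lemma circn_split d i j : (circn d i j : nat) =
  ((i.+1 <= j) && (j < i + d + 1) : nat) + ((0 <= j) && (j < i - d) : nat).
Proof.
rewrite /circn.
case: (ltnP i j) => H1 /=; case: (leqP j (i+d)) => H2 /=;
case: (ltnP (j + d) i) => H3 /=;
case: (ltnP j (i + d + 1)) => H4 /=; case: (ltnP j (i - d)) => H5 /=; lia.
Qed.

Lemma circn_count d i : i < d.*2.+1 ->
  \sum_(0 <= j < d.*2.+1) (circn d i j : nat) = d.
Proof.
move=> Hi.
rewrite (eq_bigr (fun j => ((i.+1 <= j) && (j < i + d + 1) : nat) + ((0 <= j) && (j < i - d) : nat))); last by move=> j _; exact: circn_split.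
rewrite big_split /= count_int count_lt -!addnn. lia.
Qed.

Lemma circn_irr d i : circn d i i = false.
Proof. rewrite /circn ltnn /=; apply/negbTE; rewrite -leqNgt; lia. Qed.

Lemma circn_tour d i j : i < d.*2.+1 -> j < d.*2.+1 -> i != j ->
  circn d i j (+) circn d j i.
Proof.
move=> Hi Hj /eqP Hij; rewrite /circn.
case: (ltnP i j) => ? /=; case: (leqP j (i+d)) => ? /=; case: (ltnP (j+d) i) => ? /=;
case: (ltnP j i) => ? /=; case: (leqP i (j+d)) => ? /=; case: (ltnP (i+d) j) => ? /=; lia.
Qed.
Local Open Scope ring_scope.
Lemma adj_charE (n : nat) (A : 'M[int]_n) (u : 'I_n) :
  \adj (char_poly_mx A) u u = char_poly (row' u (col' u A)).
Proof.
rewrite mxE /cofactor -signr_odd addnn odd_double expr0 mul1r.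
by rewrite row'_col'_char_poly_mx.
Qed.

Definition Qc (n : nat) (Q : 'M[{poly int}]_n) (i : nat) : 'M[int]_n :=
  \matrix_(a, b) (Q a b)`_i.

Lemma Qc_rec (n : nat) (A : 'M[int]_n) (Q : 'M[{poly int}]_n) (p : {poly int}) :
  Q *m char_poly_mx A = p%:M ->
  forall i, Qc Q i = Qc Q i.+1 *m A + (p`_i.+1)%:M.
Proof.
move=> H i.
rewrite /char_poly_mx mulmxBr mul_mx_scalar in H.
apply/matrixP=> a b.
have := congr1 (fun M : 'M[{poly int}]_n => (M a b)`_i.+1) H.
rewrite !mxE coefB coefXM /= coef_sum coefMn => E.
rewrite -E (eq_bigr (fun w => (Q a w * (A ^ polyC)%sesqui w b)`_i.+1)).
  by rewrite addrC subrK.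
by move=> w _; rewrite !mxE coefMC.
Qed.

Lemma Qc_top (n : nat) (A : 'M[int]_n) (Q : 'M[{poly int}]_n) (p : {poly int}) :
  Q *m char_poly_mx A = p%:M -> size p = n.+1 -> Qc Q n = 0.
Proof.
move=> H sp.
set S := (\sum_(a < n) \sum_(b < n) size (Q a b))%N.
have hbig: forall i, (S <= i)%N -> Qc Q i = 0.
  move=> i Hi; apply/matrixP=> a b; rewrite !mxE nth_default //.
  apply: leq_trans Hi; rewrite /S (bigD1 a) //= (bigD1 b) //= -addnA leq_addr //.
have: forall e, (e <= S)%N -> Qc Q (n + (S - e)) = 0.
  elim=> [|e IH] He; first by rewrite subn0 hbig // leq_addl.
  rewrite (Qc_rec H).
  have ->: (n + (S - e.+1)).+1 = (n + (S - e))%N by lia.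
  rewrite IH ?(ltnW He) // mul0mx add0r nth_default ?raddf0 // sp; lia.
by move/(_ S (leqnn S)); rewrite subnn addn0.
Qed.

Lemma addE (n : nat) (M N : 'M[int]_n) i j : (M + N) i j = M i j + N i j.
Proof. by rewrite mxE. Qed.
Lemma scaleE (n : nat) (c : int) (M : 'M[int]_n) i j : (c *: M) i j = c * M i j.
Proof. by rewrite mxE. Qed.
Lemma scalE (n : nat) (c : int) (i : 'I_n) : (c%:M : 'M[int]_n) i i = c.
Proof. by rewrite mxE eqxx mulr1n. Qed.

Lemma link (n : nat) (A : 'M[int]_n) : (4 < n)%N -> (forall u, A u u = 0) ->
  (forall u, (A *m A) u u = 0) ->
  forall u v, char_poly (row' u (col' u A)) = char_poly (row' v (col' v A)) ->
  (A *m A *m A *m A) u u = (A *m A *m A *m A) v v.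
Proof.
case: n A => [|[|[|[|[|m]]]]] A // _ HA HA2 u v.
set Q := \adj (char_poly_mx A).
have HQ : Q *m char_poly_mx A = (char_poly A)%:M by rewrite mul_adj_mx.
have R := Qc_rec HQ.
have T := Qc_top HQ (size_char_poly A).
have c5 : (char_poly A)`_m.+4.+1 = 1.
  have := char_poly_monic A; move/monicP; by rewrite lead_coefE size_char_poly.
have c4 : (char_poly A)`_m.+4 = 0.
  by rewrite (char_poly_trace A) // /mxtrace big1 ?oppr0.
have E: forall w, (Q w w)`_m = (A *m A *m A *m A) w w + (char_poly A)`_m.+1.
  move=> w.
  have -> : (Q w w)`_m = Qc Q m w w by rewrite /Qc [RHS]mxE.
  rewrite R R R R R T mul0mx add0r c5 c4 raddf0 addr0 mul1mx.
  rewrite !mulmxDl !mul_scalar_mx !addE !scaleE scalE -scalemxAl scaleE HA HA2 !mulr0 !addr0.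
  by [].
move=> Huv.
apply: (@addIr _ ((char_poly A)`_m.+1)).
by rewrite -!E /Q !adj_charE Huv.
Qed.
Lemma cp_reindex (p q : nat) (M : 'M[int]_p) (N : 'M[int]_q) (f : 'I_p -> 'I_q) :
  p = q -> injective f -> (forall i j, M i j = N (f i) (f j)) ->
  char_poly M = char_poly N.
Proof.
move=> epq; subst q => finj hMN.
pose s := perm finj. rewrite /char_poly.
have -> : char_poly_mx M = row_perm s (col_perm s (char_poly_mx N)).
  apply/matrixP=> i j; rewrite !mxE !permE hMN (inj_eq finj) //.
rewrite row_permE col_permE !det_mulmx !det_perm odd_permV.
by rewrite mulrCA -signr_addb addbb expr0 mulr1.
Qed.

Lemma principal_rowcol (n : nat) (A : 'M[int]_n) (u : 'I_n) :
  char_poly (principal_submx A [set~ u]) = char_poly (row' u (col' u A)).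
Proof.
have Hin : forall j : 'I_n.-1, lift u j \in [set~ u].
  by move=> j; rewrite !inE eq_sym neq_lift.
symmetry.
apply: (@cp_reindex _ _ _ _ (fun j => enum_rank_in (Hin j) (lift u j))).
- by rewrite cardsC1 card_ord.
- move=> j j' /(congr1 enum_val).
  by rewrite !enum_rankK_in ?Hin //; apply: lift_inj.
- by move=> i j; rewrite !mxE !enum_rankK_in ?Hin.
Qed.

Definition tbl : seq (seq bool) :=
 [:: [:: false;false;false;false;true;true;true];
     [:: true;false;false;false;false;true;true];
     [:: true;true;false;false;true;false;false];
     [:: true;true;true;false;false;false;false];
     [:: false;true;false;true;false;false;true];
     [:: false;false;true;true;true;false;false];
     [:: false;false;true;true;false;true;false]].
Definition t7n (i j : nat) : bool := nth false (nth [::] tbl i) j.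
Definition b2 (i j : nat) : nat := (\sum_(0 <= k < 7) (t7n i k * t7n k j))%N.
Definition b4 (i j : nat) : nat := (\sum_(0 <= k < 7) (b2 i k * b2 k j))%N.

Lemma b4vals : b4 0 0 = 14%N /\ b4 4 4 = 12%N.
Proof. rewrite /b4 /b2 unlock; vm_compute; split; reflexivity. Qed.

Lemma t7sums : all (fun i => \sum_(0 <= k < 7) (t7n i k : nat) == 3)%N (iota 0 7)
  && all (fun i => \sum_(0 <= k < 7) (t7n k i : nat) == 3)%N (iota 0 7).
Proof. rewrite unlock; vm_compute; reflexivity. Qed.

Lemma t7_row (i : 'I_7) : (\sum_(k < 7) (t7n i k : nat))%N = 3%N.
Proof.
have /andP[/allP H _] := t7sums.
have := H i; rewrite mem_iota /= ltn_ord => /(_ isT).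
by rewrite big_mkord => /eqP.
Qed.

Lemma t7_col (i : 'I_7) : (\sum_(k < 7) (t7n k i : nat))%N = 3%N.
Proof.
have /andP[_ /allP H] := t7sums.
have := H i; rewrite mem_iota /= ltn_ord => /(_ isT).
by rewrite big_mkord => /eqP.
Qed.

Lemma t7_irr (i : 'I_7) : t7n i i = false.
Proof. by case: i => [[|[|[|[|[|[|[|i]]]]]]] Hi]. Qed.

Lemma t7_tour (i j : 'I_7) : i != j -> t7n i j (+) t7n j i.
Proof.
by case: i => [[|[|[|[|[|[|[|i]]]]]]] Hi] //; case: j => [[|[|[|[|[|[|[|j]]]]]]] Hj].
Qed.

Section Constr.
Variable k : nat.
Local Notation h := (3 ^ k)%N.
Definition dd := (h./2)%N.

Lemma h_eq : h = dd.*2.+1.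
Proof.
have E := odd_double_half h; rewrite oddX /= orbT in E.
by rewrite /dd -[in LHS]E add1n.
Qed.

Definition domk : rel 'I_(h * 7) := fun u v =>
  let x := mxtens_unindex u in let y := mxtens_unindex v in
  circn dd x.1 y.1 || ((x.1 == y.1) && t7n x.2 y.2).

Lemma domk_idx c b c' b' :
  domk (mxtens_index (c, b)) (mxtens_index (c', b')) =
  circn dd c c' || ((c == c') && t7n b b').
Proof. by rewrite /domk !mxtens_indexK. Qed.

Lemma domk_irr u : domk u u = false.
Proof. by case: (mxtens_indexP u) => c b; rewrite domk_idx circn_irr eqxx t7_irr. Qed.

Lemma domk_tour u v : u != v -> domk u v (+) domk v u.
Proof.
case: (mxtens_indexP u) => c b; case: (mxtens_indexP v) => c' b' Hne.
rewrite !domk_idx.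
have Hc : (c < dd.*2.+1)%N by rewrite -h_eq.
have Hc' : (c' < dd.*2.+1)%N by rewrite -h_eq.
case: (eqVneq c c') => [Ec|Nc].
  subst c'; rewrite circn_irr /=; apply: t7_tour.
  by apply: contraNneq Hne => ->.
rewrite /= !orbF.
by apply: circn_tour.
Qed.

Lemma circ_count (c : 'I_h) : (\sum_(j < h) (circn dd c j : nat))%N = dd.
Proof.
rewrite -(big_mkord xpredT (fun j => (circn dd c j : nat))).
have Hc : (c < dd.*2.+1)%N by rewrite -h_eq.
rewrite [in X in (\sum_(0 <= _ < X) _)%N]h_eq.
exact: circn_count.
Qed.

Lemma outdeg_domk u : outdeg domk u = (7 * dd + 3)%N.
Proof.
rewrite /outdeg -sum1_card big_mkcond /=.
rewrite (reindex (@mxtens_index h 7)) /=; last first.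
  by apply: onW_bij; exists (@mxtens_unindex h 7); [exact: mxtens_indexK | exact: mxtens_unindexK].
case: (mxtens_indexP u) => c b.
rewrite (eq_bigr (fun p : 'I_h * 'I_7 => (circn dd c p.1 || ((c == p.1) && t7n b p.2) : nat))); last first.
  by move=> [c' b'] _; rewrite inE domk_idx; case: ifP.
rewrite -(pair_bigA _ (fun (c' : 'I_h) (b' : 'I_7) => (circn dd c c' || ((c == c') && t7n b b') : nat))) /=.
rewrite (eq_bigr (fun c' : 'I_h => 7 * circn dd c c' + 3 * (c == c'))%N); last first.
  move=> c' _; case: (boolP (circn dd c c')) => H /=.
    by rewrite big_const_ord /= (_ : c == c' = false) //; apply/negbTE; apply: contraTneq H => <-; rewrite circn_irr.
  case: (eqVneq c c') => [E|_] /=; last by rewrite big1.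
  subst c'.
  by rewrite t7_row.
rewrite big_split /= -!big_distrr /= circ_count (bigD1 c) //= eqxx big1 ?addn0 //.
by move=> c' /negPf; rewrite eq_sym => ->.
Qed.

Definition Cm : 'M[int]_h := \matrix_(i, j) (circn dd i j)%:R.
Definition J7 : 'M[int]_7 := const_mx 1.
Definition B7 : 'M[int]_7 := \matrix_(i, j) (t7n i j)%:R.

Lemma tens_scaleR m n p q (c : int) (M : 'M[int]_(m, n)) (N : 'M[int]_(p, q)) :
  M *t (c *: N) = (c *: M) *t N.
Proof.
apply/matrixP=> i j; case: (mxtens_indexP i) => i1 i2; case: (mxtens_indexP j) => j1 j2.
by rewrite !tensmxE !mxE mulrCA mulrA.
Qed.

Lemma tens_addL m n p q (M1 M2 : 'M[int]_(m, n)) (N : 'M[int]_(p, q)) :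
  (M1 + M2) *t N = M1 *t N + M2 *t N.
Proof.
apply/matrixP=> i j; case: (mxtens_indexP i) => i1 i2; case: (mxtens_indexP j) => j1 j2.
by rewrite [RHS]mxE !tensmxE mxE mulrDl.
Qed.

Lemma adj_domk : adj domk = Cm *t J7 + 1%:M *t B7.
Proof.
apply/matrixP=> u v; case: (mxtens_indexP u) => c b; case: (mxtens_indexP v) => c' b'.
rewrite addE !tensmxE /adj !mxE domk_idx mulr1.
case: (eqVneq c c') => [E|N] /=.
  by subst c'; rewrite circn_irr /= mulr1n mul1r add0r.
by rewrite mulr0n mul0r addr0 orbF.
Qed.

Lemma JJ : J7 *m J7 = 7 *: J7.
Proof. by apply/matrixP=> i j; rewrite !mxE (eq_bigr (fun _ => 1)) ?sumr_const ?card_ord // => l _; rewrite !mxE mulr1. Qed.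

Lemma BJ : B7 *m J7 = 3 *: J7.
Proof.
apply/matrixP=> i j; rewrite !mxE (eq_bigr (fun l : 'I_7 => ((t7n i l : nat))%:R)).
  by rewrite -natr_sum t7_row mulr1.
by move=> l _; rewrite !mxE mulr1.
Qed.

Lemma JB : J7 *m B7 = 3 *: J7.
Proof.
apply/matrixP=> i j; rewrite !mxE (eq_bigr (fun l : 'I_7 => ((t7n l j : nat))%:R)).
  by rewrite -natr_sum t7_col mulr1.
by move=> l _; rewrite !mxE mul1r.
Qed.

Definition good (P : 'M[int]_(h * 7)) (W : 'M[int]_7) :=
  exists K : 'M[int]_h, P = 1%:M *t W + K *t J7.

Lemma good_step P W : good P W -> (exists a, W *m J7 = a *: J7) ->
  good (P *m adj domk) (W *m B7) /\ exists a, (W *m B7) *m J7 = a *: J7.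
Proof.
move=> [K ->] [a Ha]; split; last first.
  by exists (a * 3); rewrite -mulmxA BJ -scalemxAr Ha scalerA mulrC.
exists (a *: Cm + 7 *: (K *m Cm) + 3 *: K).
rewrite adj_domk mulmxDl !mulmxDr !tensmx_mul Ha JJ JB mul1mx mulmx1 !tens_scaleR.
rewrite !tens_addL mulmx1.
by rewrite [X in X + _ = _]addrC -!addrA.
Qed.

Lemma J7E (b : 'I_7) : J7 b b = 1.
Proof. by rewrite mxE. Qed.

Lemma A4_diag : exists K : 'M[int]_h, forall c b,
  (adj domk *m adj domk *m adj domk *m adj domk) (mxtens_index (c, b)) (mxtens_index (c, b))
  = (B7 *m B7 *m B7 *m B7) b b + K c c.
Proof.
have g1 : good (adj domk) B7 by exists Cm; rewrite adj_domk addrC.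
have e1 : exists a, B7 *m J7 = a *: J7 by exists 3; exact: BJ.
have [g2 e2] := good_step g1 e1.
have [g3 e3] := good_step g2 e2.
have [[K ->] _] := good_step g3 e3.
exists K => c b.
by rewrite mxE !tensmxE scalE J7E mul1r mulr1.
Qed.

End Constr.

Lemma B2E (i j : 'I_7) : (B7 *m B7) i j = (b2 i j)%:R.
Proof.
rewrite mxE /b2 big_mkord natr_sum; apply: eq_bigr => l _.
by rewrite !mxE natrM.
Qed.

Lemma B4E (i j : 'I_7) : (B7 *m B7 *m B7 *m B7) i j = (b4 i j)%:R.
Proof.
rewrite -!mulmxA mulmxA mxE /b4 big_mkord natr_sum; apply: eq_bigr => l _.
by rewrite !B2E natrM.
Qed.

Theorem theorem1p2 (k : nat) :
  let n := (3 ^ k * 7)%N in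
  exists dom : rel 'I_n,
    regular_tournament dom /\ ~ spectrally_monomorphic n.-1 dom.
Proof.
move=> n; exists (@domk k); split.
  split; first by split; [exact: domk_irr | exact: domk_tour].
  by move=> i j; rewrite !outdeg_domk.
move=> Hsm.
have h0 : (0 < 3 ^ k)%N by rewrite expn_gt0.
pose c0 : 'I_(3 ^ k) := Ordinal h0.
pose u := mxtens_index (c0, (ord0 : 'I_7)).
pose v := mxtens_index (c0, (Ordinal (isT : (4 < 7)%N) : 'I_7)).
have Hu : #|[set~ u]| = n.-1 by rewrite cardsC1 card_ord.
have Hv : #|[set~ v]| = n.-1 by rewrite cardsC1 card_ord.
have := Hsm _ _ Hu Hv.
rewrite !principal_rowcol => E.
have Hn : (4 < 3 ^ k * 7)%N by apply: leq_trans (leq_pmull 7 h0).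
have HA : forall w, adj (@domk k) w w = 0 by move=> w; rewrite /adj mxE domk_irr.
have HA2 : forall w, (adj (@domk k) *m adj (@domk k)) w w = 0.
  move=> w; rewrite mxE big1 // => x _; rewrite /adj !mxE.
  case: (eqVneq w x) => [<-|N]; first by rewrite domk_irr mul0r.
  have := domk_tour N.
  by case: (@domk k w x); case: (@domk k x w) => //= H; rewrite ?mulr0 ?mul0r.
have := link Hn HA HA2 E.
have [K HK] := @A4_diag k.
rewrite !HK !B4E /=.
have [-> ->] := b4vals.
by move/addIr.
Qed.
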